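(* Let $A \in \mathbb{C}^{m\times n}$, let $k$ be an integer with $1 \le k \le \min\{m,n\}$, and let $s,t$ be integers with $0 \le s < k$, $t \ge 1$ and $s+t \le n$. Let $Q \in \mathbb{C}^{m\times m}$ be unitary and $\Pi$ an $n\times n$ permutation matrix such that $R^{(0)} := Q^*A\Pi$ has $\mathrm{GB}(s)$ form. For $s < j \le s+t$ write $\gamma(j) = \|R^{(0)}((s+1):m,\, j)\|_2^2$, and let $\mu = \max_{s+t<j\le n}\|A\Pi(:,j)\|_2^2$ (with $\mu=0$ if $s+t=n$). Assume $$\max_{s<j\le s+t}\gamma(j) \;\ge\; \mu .$$ Let $b$ be an integer with $1 \le b \le t$, and let $\sigma$ be a permutation of $\{1,\dots,t\}$ such that $\gamma(s+\sigma(1)) \ge \gamma(s+\sigma(2)) \ge \dots \ge \gamma(s+\sigma(t))$. Call the indices $s+\sigma(1),\dots,s+\sigma(b)$ the candidates, and let $\delta = \max\{\gamma(j) : j \in \{s+1,\dots,s+t\} \text{ not a candidate}\}$ (with $\delta = 0$ if $b=t$). Let $B = R^{(0)}((s+1):m,\; [s+\sigma(1),\dots,s+\sigma(b)]) \in \mathbb{C}^{(m-s)\times b}$, let $d=\min\{m-s,\,b\}$, and apply $d$ steps of the Golub–Businger algorithm to $B$, producing a permutation matrix $\widehat{P}$ of size $b$, Householder reflections $H_1,\dots,H_d \in \mathbb{C}^{(m-s)\times(m-s)}$ and $\widehat{R} = H_d\cdots H_1 B \widehat{P}$. Let $$c = \max\{\, i \in \{1,\dots,d\} : |\widehat{R}(i,i)|^2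 \ge \max(\delta,\mu) \,\}.$$ Let $\widehat{\Pi}$ be an $n\times n$ permutation matrix which fixes every column position outside $\{s+1,\dots,s+t\}$, places the candidate columns of $R^{(0)}$ (i.e. the columns of $R^{(0)}$ whose restrictions to rows $(s+1):m$ are the columns of $B$) into positions $s+1,\dots,s+b$ in the order given by $B\widehat{P}$ (so that $R^{(0)}\widehat{\Pi}((s+1):m,\,(s+1):(s+b)) = B\widehat{P}$), and places the remaining non-candidate indices of $\{s+1,\dots,s+t\}$ into positions $s+b+1,\dots,s+t$ in some order. Let $$\widehat{Q} = \begin{bmatrix} I_{s\times s} & 0 \\ 0 & H_1H_2\cdots H_c\end{bmatrix}.$$ Then $(Q\widehat{Q})^*A(\Pi\widehat{\Pi})$ has $\mathrm{GB}(s+c)$ form.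
   Context: A matrix $R \in \mathbb{C}^{m\times n}$ is said to have $\mathrm{GB}(k)$ form (for $0\le k\le\min\{m,n\}$) if its first $k$ columns are upper-triangular and $|R(i,i)| = \max_{i\le j\le n}\|R(i:m,\,j)\|_2$ for $1\le i\le k$; every matrix is in $\mathrm{GB}(0)$ form. Notation $R(i:m, j)$ denotes entries $i,\dots,m$ of column $j$; $A(:,j)$ is the $j$-th column. A Householder reflection at step $i$ on $\mathbb{C}^{p}$ is a unitary matrix $I - \tau vv^*$ with real $\tau\ge 0$, $v(1)=\dots=v(i-1)=0$, $v(i)=1$, which maps a given vector $x$ to $[x(1),\dots,x(i-1),\mu',0,\dots,0]$ with $|\mu'| = \|x(i:p)\|_2$. The Golub–Businger algorithm applied to $B\in\mathbb{C}^{p\times b}$ for $d\le\min\{p,b\}$ steps: set $R\leftarrow B$; for $i=1,\dots,d$, pick $j_{\max}\in\arg\max_{j\ge i}\|R(i:p,j)\|_2$, swap columns $i$ and $j_{\max}$ of $R$ (recording the swap in the permutation $\widehat{P}$), compute the Householder reflection $H_i$ at step $i$ zeroing entries $(i+1):p$ of column $i$, and set $R\leftarrow H_iR$. The output $\widehat R$ is the final $R$, which equals $H_d\cdots H_1 B\widehat P$. *)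

(* Defs.v *)
From HB Require Import structures.
From mathcomp Require Import all_boot all_order all_algebra all_fingroup.
From mathcomp Require Import reals complex.
Set Implicit Arguments. Unset Strict Implicit. Unset Printing Implicit Defensive.
Import Order.TTheory GRing.Theory Num.Theory.
Local Open Scope ring_scope.

Section Defs.
Variable R : realType.
Local Notation C := (R[i]).

Definition cabs (z : C) : R := ComplexField.Normc.normc z.

Definition ctr (p q : nat) (A : 'M[C]_(p, q)) : 'M[C]_(q, p) := (map_mx conjc A)^T.

Definition unitary (p : nat) (U : 'M[C]_p) : Prop := ctr U *m U = 1%:M.

(** Euclidean norm of A(r:p, j) (0-based row r, i.e. rows r+1..p in 1-based). *)
Definition colnorm (p q : nat) (A : 'M[C]_(p, q)) (r : nat) (j : 'I_q) : R :=
  Num.sqrt (\sum_(i < p | (r <= i)%N) cabs (A i j) ^+ 2).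

Definition colnorm2 (p q : nat) (A : 'M[C]_(p, q)) (r : nat) (j : 'I_q) : R :=
  \sum_(i < p | (r <= i)%N) cabs (A i j) ^+ 2.

(** GB(k) form (0-based indices: columns 0..k-1). *)
Definition GB (p q : nat) (k : nat) (M : 'M[C]_(p, q)) : Prop :=
  (k <= minn p q)%N /\
  (forall (i : 'I_p) (j : 'I_q), (j < k)%N -> (j < i)%N -> M i j = 0) /\
  (forall (i : 'I_p) (i' : 'I_q), val i = val i' -> (i < k)%N ->
     cabs (M i i') = \big[Num.max/0]_(j : 'I_q | (i <= j)%N) colnorm M i j).

Definition householder (p : nat) (k : nat) (H : 'M[C]_p) (x : 'cV[C]_p) : Prop :=
  unitary H /\
  (exists (tau : R) (v : 'cV[C]_p),
     0 <= tau /\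
     (forall i : 'I_p, (i < k)%N -> v i 0 = 0) /\
     (forall i : 'I_p, val i = k -> v i 0 = 1) /\
     H = 1%:M - (tau%:C)%C *: (v *m ctr v)) /\
  (forall i : 'I_p, (i < k)%N -> (H *m x) i 0 = x i 0) /\
  (forall i : 'I_p, (k < i)%N -> (H *m x) i 0 = 0) /\
  (forall i : 'I_p, val i = k -> cabs ((H *m x) i 0) = colnorm x k ord0).

(** A run of [d] steps of the Golub–Businger algorithm on B (0-based steps
    k = 0..d-1).  Rs k is the working matrix before step k (Rs 0 = B),
    H k is the Householder reflection of step k, and Ps k is the accumulated
    column permutation: Rs k = H (k-1) ... H 0 * B * Phat_k with
    (B * Phat_k)(:, l) = B(:, Ps k l).  The output is Rhat = Rs d, and the
    permutation matrix Phat corresponds to Ps d. *)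
Definition GB_run (p b d : nat) (B : 'M[C]_(p, b))
  (Rs : nat -> 'M[C]_(p, b)) (Ps : nat -> 'S_b) (H : nat -> 'M[C]_p) : Prop :=
  (d <= minn p b)%N /\ Rs 0%N = B /\ Ps 0%N = 1%g /\
  forall k : 'I_b, (k < d)%N ->
    exists jmax : 'I_b,
      (k <= jmax)%N /\
      (forall j : 'I_b, (k <= j)%N -> colnorm (Rs k) k j <= colnorm (Rs k) k jmax) /\
      householder k (H k) (col k (col_perm (tperm k jmax) (Rs k))) /\
      Rs k.+1 = H k *m col_perm (tperm k jmax) (Rs k) /\
      Ps k.+1 = (tperm k jmax * Ps k)%g.

(** permutation matrix with (A *m pmx pi)(:, j) = A(:, pi j) *)
Definition pmx (q : nat) (pi : 'S_q) : 'M[C]_q := col_perm pi 1%:M.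

End Defs.

(* Main.v *)
Require Import Defs.
From HB Require Import structures.
From mathcomp Require Import all_boot all_order all_algebra all_fingroup.
From mathcomp Require Import reals complex.
From mathcomp Require Import zify.
Import Order.TTheory GRing.Theory Num.Theory.
Local Open Scope ring_scope.

Module LemmaHelpers.
Set Implicit Arguments. Unset Strict Implicit.
Local Open Scope complex_scope.

Section Helpers.
Variable R : realType.
Local Notation C := (R[i]).

Lemma cabs_ge0 (z : C) : 0 <= cabs z.
Proof. by case: z => a b; rewrite /cabs /= sqrtr_ge0. Qed.

Lemma cabs2C (z : C) : ((cabs z) ^+ 2)%:C = z * (z^*)%C.
Proof.
rewrite -sqr_normc; have -> : `|z| = (cabs z)%:C by case: z.
by rewrite rmorphXn.
Qed.

Lemma sum_shift (f : nat -> R) (P : pred nat) (s m : nat) : (s <= m)%N ->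
  \sum_(l < m | (s <= l)%N && P (l - s)%N) f l = \sum_(l < m - s | P l) f (s + l)%N.
Proof.
move=> hs.
rewrite -(big_mkord (fun l => (s <= l)%N && P (l - s)%N)).
rewrite (big_cat_nat (leq0n s) hs) /= big_nat_cond big1 ?add0r; last first.
  by move=> i /andP[/andP[_ hi]]; rewrite leqNgt hi.
rewrite -{1}(add0n s) big_addn big_mkord.
apply: eq_big => [i|i _]; first by rewrite leq_addl addnK.
by rewrite addnC.
Qed.

Lemma sum_delta (p : nat) (i : 'I_p) (f : 'I_p -> C) :
  \sum_(l < p) (i == l)%:R * f l = f i.
Proof.
rewrite (bigD1 i) //= eqxx mul1r big1 ?addr0 // => l hl.
by rewrite eq_sym (negbTE hl) mul0r.
Qed.

Lemma ctr_mul (p q r : nat) (X : 'M[C]_(p, q)) (Y : 'M[C]_(q, r)) :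
  ctr (X *m Y) = ctr Y *m ctr X.
Proof. by rewrite /ctr map_mxM trmx_mul. Qed.

Lemma ctrK (p q : nat) (X : 'M[C]_(p, q)) : ctr (ctr X) = X.
Proof. by apply/matrixP => i j; rewrite /ctr !mxE conjcK. Qed.

Lemma colnorm2_ge0 (p q : nat) (X : 'M[C]_(p, q)) r j : 0 <= colnorm2 X r j.
Proof. by apply: sumr_ge0 => i _; rewrite exprn_ge0 ?cabs_ge0. Qed.

Lemma colnorm2_col0 (p q : nat) (X : 'M[C]_(p, q)) j :
  (colnorm2 X 0 j)%:C = (ctr (col j X) *m col j X) 0 0.
Proof.
rewrite /colnorm2 mxE rmorph_sum; apply: eq_big => // i _.
rewrite -[LHS]/(((cabs _)^+2)%:C) cabs2C. by rewrite /ctr !mxE mulrC.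
Qed.

Lemma unitary_colnorm2 (p q : nat) (U : 'M[C]_p) (X : 'M[C]_(p, q)) j :
  ctr U *m U = 1%:M -> colnorm2 (U *m X) 0 j = colnorm2 X 0 j.
Proof.
move=> hU; apply: complexI.
rewrite !colnorm2_col0 !colE -mulmxA ctr_mul -mulmxA (mulmxA (ctr U)) hU mul1mx //.
Qed.

Lemma colnorm2_split (p q : nat) (X : 'M[C]_(p, q)) r j :
  colnorm2 X 0 j = \sum_(i < p | (i < r)%N) cabs (X i j) ^+ 2 + colnorm2 X r j.
Proof.
rewrite /colnorm2 (bigID (fun i : 'I_p => (r <= i)%N)) /= addrC.
by congr (_ + _); apply: eq_bigl => i; rewrite ltnNge.
Qed.

Lemma colnorm2_mono (p q : nat) (X : 'M[C]_(p, q)) r r' j : (r <= r')%N ->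
  colnorm2 X r' j <= colnorm2 X r j.
Proof.
move=> h; rewrite /colnorm2 [X in _ <= X](bigID (fun i : 'I_p => (r' <= i)%N)) /=.
rewrite -[X in X <= _]addr0 lerD //.
  by rewrite le_eqVlt; apply/orP; left; apply/eqP; apply: eq_bigl => i;
     case: (leqP r' i) => hi; rewrite ?andbT ?andbF // (leq_trans h hi).
by apply: sumr_ge0 => i _; rewrite exprn_ge0 ?cabs_ge0.
Qed.

End Helpers.

Section Helpers2.
Variable R : realType.
Local Notation C := (R[i]).

Lemma hh_entry (p k : nat) (Hm : 'M[C]_p) x : householder k Hm x ->
  forall i l : 'I_p, (i < k)%N || (l < k)%N -> Hm i l = (i == l)%:R.
Proof.
case=> _ [[tau [v [_ [hv0 [_ ->]]]]] _] i l hil.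
rewrite !mxE big_ord1 /ctr !mxE.
case/orP: hil => h; first by rewrite hv0 // !mul0r mulr0 subr0.
by rewrite (hv0 l h) conjc0 mulr0 mulr0 subr0.
Qed.

Lemma hh_herm (p k : nat) (Hm : 'M[C]_p) x : householder k Hm x -> ctr Hm = Hm.
Proof.
case=> _ [[tau [v [_ [_ [_ ->]]]]] _].
apply/matrixP => i l; rewrite /ctr !mxE big_ord1 !mxE big_ord1 !mxE.
rewrite rmorphB rmorphMn rmorph1 !rmorphM /= oppr0 conjcK eq_sym.
congr (_ - _ * _); exact: mulrC. Qed.

Lemma hh_rows (p q k : nat) (Hm : 'M[C]_p) x (X : 'M[C]_(p, q)) :
  householder k Hm x -> forall (i : 'I_p) j, (i < k)%N -> (Hm *m X) i j = X i j.
Proof.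
move=> hh i j hi; rewrite mxE -[RHS](sum_delta i (fun l => X l j)).
by apply: eq_bigr => l _; rewrite (hh_entry hh) ?hi.
Qed.

Lemma hh_fix (p q k : nat) (Hm : 'M[C]_p) x (X : 'M[C]_(p, q)) j :
  householder k Hm x -> (forall i : 'I_p, (k <= i)%N -> X i j = 0) ->
  forall i : 'I_p, (Hm *m X) i j = X i j.
Proof.
move=> hh hX i; rewrite mxE -[RHS](sum_delta i (fun l => X l j)).
apply: eq_bigr => l _; case: (ltnP l k) => hl.
  by rewrite (hh_entry hh) ?hl ?orbT.
by rewrite hX // !mulr0.
Qed.

Lemma hh_norm (p q k : nat) (Hm : 'M[C]_p) x (X : 'M[C]_(p, q)) r j :
  householder k Hm x -> (r <= k)%N -> colnorm2 (Hm *m X) r j = colnorm2 X r j.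
Proof.
move=> hh hr.
have h0 := unitary_colnorm2 X j (proj1 hh).
rewrite !(colnorm2_split _ r) in h0.
have e : \sum_(i < p | (i < r)%N) cabs ((Hm *m X) i j) ^+ 2 =
         \sum_(i < p | (i < r)%N) cabs (X i j) ^+ 2.
  by apply: eq_bigr => i hi; rewrite (hh_rows _ hh) // (leq_trans hi hr).
by move: h0; rewrite e => /addrI.
Qed.

End Helpers2.

Lemma mulmx_col_perm (R : realType) (q p r : nat) (X : 'M[R[i]]_(q, p)) s (Y : 'M[R[i]]_(p, r)) :
  X *m col_perm s Y = col_perm s (X *m Y).
Proof. by apply/matrixP => i j; rewrite !mxE; apply: eq_bigr => l _; rewrite mxE. Qed.

Lemma colnorm2_col_perm (R : realType) (p q : nat) (X : 'M[R[i]]_(p, q)) s r j :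
  colnorm2 (col_perm s X) r j = colnorm2 X r (s j).
Proof. by apply: eq_bigr => i _; rewrite mxE. Qed.

Lemma colnorm2_col (R : realType) (p q : nat) (X : 'M[R[i]]_(p, q)) r j :
  colnorm2 (col j X) r ord0 = colnorm2 X r j.
Proof. by apply: eq_bigr => i _; rewrite mxE. Qed.

Section Run.
Variable R : realType.
Local Notation C := (R[i]).
Variables (p b d : nat) (B : 'M[C]_(p, b)) (Rs : nat -> 'M[C]_(p, b))
  (Ps : nat -> 'S_b) (H : nat -> 'M[C]_p).
Hypothesis hrun : GB_run d B Rs Ps H.

Fixpoint W k : 'M[C]_p := if k is k'.+1 then H k' *m W k' else 1%:M.
Definition G k := W k *m B.

Lemma GS k : G k.+1 = H k *m G k.
Proof. by rewrite /G /= mulmxA. Qed.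

Lemma run_db : (d <= b)%N.
Proof. by case: hrun => h _; move: h; rewrite leq_min => /andP[]. Qed.
Lemma run_dp : (d <= p)%N.
Proof. by case: hrun => h _; move: h; rewrite leq_min => /andP[]. Qed.

Lemma run_step k (kb : (k < b)%N) : (k < d)%N ->
  exists jmax : 'I_b, (k <= jmax)%N /\
   (forall j : 'I_b, (k <= j)%N -> colnorm (Rs k) k j <= colnorm (Rs k) k jmax) /\
   householder k (H k) (col (Ordinal kb) (col_perm (tperm (Ordinal kb) jmax) (Rs k))) /\
   Rs k.+1 = H k *m col_perm (tperm (Ordinal kb) jmax) (Rs k) /\
   Ps k.+1 = (tperm (Ordinal kb) jmax * Ps k)%g.
Proof. move=> hk; case: hrun => _ [_ [_ h]]; exact: (h (Ordinal kb) hk). Qed.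

Lemma run_RsG k : (k <= d)%N -> Rs k = col_perm (Ps k) (G k).
Proof.
elim: k => [|k IH] hk.
  by case: hrun => _ [-> [-> _]]; rewrite col_perm1 /G /= mul1mx.
have kb : (k < b)%N by apply: leq_trans hk run_db.
have [jm [_ [_ [_ [-> ->]]]]] := run_step kb hk.
by rewrite IH ?(ltnW hk) // -col_permM mulmx_col_perm GS.
Qed.

Lemma run_P1 k e : (k + e <= d)%N -> forall l : 'I_b, (l < k)%N -> Ps (k + e) l = Ps k l.
Proof.
elim: e => [|e IH] h l hl; first by rewrite addn0.
rewrite addnS in h *.
have kb : (k + e < b)%N by apply: leq_trans h run_db.
have [jm [hjm [_ [_ [_ ->]]]]] := run_step kb h.
rewrite permM tpermD ?IH ?(ltnW h) //.
  by apply: contraTneq hl => <- /=; rewrite -leqNgt leq_addr.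
by apply: contraTneq hl => <-; rewrite -leqNgt (leq_trans (leq_addr e k) hjm).
Qed.

Lemma run_P2 k e : (k + e <= d)%N -> forall j : 'I_b, (k <= j)%N ->
  exists j'' : 'I_b, (k <= j'')%N /\ Ps (k + e) j = Ps k j''.
Proof.
elim: e => [|e IH] h j hj; first by exists j; rewrite addn0.
rewrite addnS in h *.
have kb : (k + e < b)%N by apply: leq_trans h run_db.
have [jm [hjm [_ [_ [_ ->]]]]] := run_step kb h.
rewrite permM; apply: IH; first exact: ltnW.
case: tpermP => _ //=; first exact: leq_trans (leq_addr e k) hjm.
exact: leq_addr.
Qed.

Lemma run_rows k e : (k + e <= d)%N -> forall (i : 'I_p) j, (i < k)%N ->
  G (k + e) i j = G k i j.
Proof.
elim: e => [|e IH] h i j hi; first by rewrite addn0.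
rewrite addnS in h *.
have kb : (k + e < b)%N by apply: leq_trans h run_db.
have [jm [hjm [_ [hh _]]]] := run_step kb h.
by rewrite GS (hh_rows _ hh) ?IH ?(ltnW h) // (leq_trans hi (leq_addr e k)).
Qed.

Lemma run_norm k e r j : (r <= k)%N -> (k + e <= d)%N ->
  colnorm2 (G (k + e)) r j = colnorm2 (G k) r j.
Proof.
move=> hr; elim: e => [|e IH] h; first by rewrite addn0.
rewrite addnS in h *.
have kb : (k + e < b)%N by apply: leq_trans h run_db.
have [jm [hjm [_ [hh _]]]] := run_step kb h.
by rewrite GS (hh_norm _ _ hh) ?IH ?(ltnW h) // (leq_trans hr (leq_addr e k)).
Qed.

Lemma run_hx k (kb : (k < b)%N) (hk : (k < d)%N) jm (i : 'I_p) :
  Ps k.+1 = (tperm (Ordinal kb) jm * Ps k)%g ->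
  (H k *m col (Ordinal kb) (col_perm (tperm (Ordinal kb) jm) (Rs k))) i 0 =
  G k.+1 i (Ps k.+1 (Ordinal kb)).
Proof.
move=> hP; rewrite GS mxE [RHS]mxE; apply: eq_bigr => l _; congr (_ * _).
rewrite mxE mxE (run_RsG (ltnW hk)) mxE hP permM //.
Qed.

Lemma run_tri k : (k <= d)%N -> forall (l : 'I_b) (i : 'I_p), (l < k)%N -> (l < i)%N ->
  G k i (Ps k l) = 0.
Proof.
elim: k => [|k IH] hk l i hl hli //.
have kb : (k < b)%N by apply: leq_trans hk run_db.
have [jm [hjm [_ [hh [_ hP]]]]] := run_step kb hk.
case: (ltnP l k) => hlk.
  have -> : Ps k.+1 l = Ps k l.
    by have := run_P1 (e := 1) (k := k); rewrite addn1 => ->.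
  rewrite GS (hh_fix (j := Ps k l) hh) ?IH ?(ltnW hk) // => i' hi'.
  by rewrite IH ?(ltnW hk) // (leq_trans hlk hi').
have el : l = Ordinal kb by apply: val_inj => /=; apply/eqP; rewrite eqn_leq hlk -ltnS hl.
rewrite el -(run_hx hk i hP).
case: hh => _ [_ [_ [h4 _]]]; apply: h4.
by move: hli; rewrite el.
Qed.

Definition Dv l (i : 'I_p) (j : 'I_b) := cabs (G l.+1 i (Ps l.+1 j)) ^+ 2.

Lemma run_diag l (i : 'I_p) (j0 : 'I_b) : val i = l -> val j0 = l -> (l < d)%N ->
  exists jm : 'I_b, (l <= jm)%N /\
  Dv l i j0 = colnorm2 (G l) l (Ps l jm) /\
  forall j : 'I_b, (l <= j)%N -> colnorm2 (G l) l (Ps l j) <= Dv l i j0.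
Proof.
move=> hi hj0 hl.
have lb : (l < b)%N by apply: leq_trans hl run_db.
have [jm [hjm [hmx [hh [_ hP]]]]] := run_step lb hl.
have eD : Dv l i j0 = colnorm2 (G l) l (Ps l jm).
  have -> : j0 = Ordinal lb by apply: val_inj; rewrite /= hj0.
  rewrite /Dv -(run_hx hl _ hP).
  case: hh => _ [_ [_ [_ h5]]]; rewrite h5 //.
  rewrite sqr_sqrtr ?colnorm2_ge0 //; change (colnorm2 (R:=R) (col (Ordinal lb) (col_perm (tperm (Ordinal lb) jm) (Rs l))) l ord0 = colnorm2 (G l) l (Ps l jm)).
  by rewrite colnorm2_col colnorm2_col_perm tpermL (run_RsG (ltnW hl)) colnorm2_col_perm.
exists jm; split => //; split => // j hj.
have := hmx j hj; rewrite /colnorm ler_sqrt ?colnorm2_ge0 //.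
rewrite -!/(colnorm2 _ _ _) (run_RsG (ltnW hl)) !colnorm2_col_perm eD //.
Qed.

Lemma run_Dmono l (i : 'I_p) (j : 'I_b) (i' : 'I_p) (j' : 'I_b) :
  val i = l -> val j = l -> val i' = l.+1 -> val j' = l.+1 -> (l.+1 < d)%N ->
  Dv l.+1 i' j' <= Dv l i j.
Proof.
move=> hi hj hi' hj' h.
have [jm [hjm [-> _]]] := run_diag hi' hj' h.
apply: le_trans (colnorm2_mono _ _ (leqnSn l)) _.
have := run_norm (k := l) (e := 1) (Ps l.+1 jm) (leqnn l); rewrite addn1 => ->; last exact: ltnW.
have hd1 : (l + 1 <= d)%N by rewrite addn1 ltnW.
have [j'' [hj'' e]] := run_P2 (k := l) (e := 1) hd1 (ltnW hjm).
rewrite addn1 in e; rewrite e.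
have [? [_ [_ hle]]] := run_diag hi hj (ltnW h); exact: hle.
Qed.

Lemma run_Dmono' l l' (i : 'I_p) (j : 'I_b) (i' : 'I_p) (j' : 'I_b) :
  val i = l -> val j = l -> val i' = l' -> val j' = l' -> (l <= l')%N -> (l' < d)%N ->
  Dv l' i' j' <= Dv l i j.
Proof.
move=> hi hj; elim: l' i' j' => [|l' IH] i' j' hi' hj'.
  rewrite leqn0 => /eqP el _.
  have -> : i' = i by apply: val_inj; rewrite hi hi' el.
  have -> : j' = j by apply: val_inj; rewrite hj hj' el.
  by rewrite el.
rewrite leq_eqVlt => /orP[/eqP el|hl] hd.
  have -> : i' = i by apply: val_inj; rewrite hi hi' el.
  have -> : j' = j by apply: val_inj; rewrite hj hj' el.
  by rewrite el.
have lp : (l' < p)%N by apply: leq_trans (ltnW hd) run_dp.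
have lb : (l' < b)%N by apply: leq_trans (ltnW hd) run_db.
apply: le_trans (run_Dmono (i := Ordinal lp) (j := Ordinal lb) erefl erefl hi' hj' hd) _.
exact: (IH (Ordinal lp) (Ordinal lb) erefl erefl hl (ltnW hd)).
Qed.

Lemma run_Dval k l (i : 'I_p) (j : 'I_b) : val i = l -> val j = l -> (l < k)%N -> (k <= d)%N ->
  cabs (G k i (Ps k j)) ^+ 2 = Dv l i j.
Proof.
move=> hi hj hlk hkd.
have [e ek] : exists e, k = (l.+1 + e)%N by exists (k - l.+1)%N; rewrite subnKC.
rewrite /Dv ek run_P1 -?ek //; last by rewrite hj.
have hd2 : (l.+1 + e <= d)%N by rewrite -ek.
by rewrite ek run_rows // hi.
Qed.

End Run.

Lemma sum_up (V : nmodType) (m s : nat) (hs : (s < m)%N) (P : pred nat) (F : 'I_m -> V)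
  (up : 'I_(m - s) -> 'I_m) : (forall l', val (up l') = (s + l')%N) ->
  \sum_(l < m | (s <= l)%N && P (l - s)%N) F l = \sum_(l' < m - s | P l') F (up l').
Proof.
move=> hup.
pose down (l : 'I_m) : 'I_(m - s) := Ordinal (ltn_sub2r hs (ltn_ord l)).
rewrite (reindex_onto up down) => [|l /andP[hl _]]; last first.
  by apply: val_inj; rewrite hup /= subnKC.
apply: eq_bigl => l'; rewrite hup leq_addr addKn /=.
by rewrite -val_eqE /= hup addKn eqxx andbT.
Qed.

Lemma mul_pmx (R : realType) (p q : nat) (X : 'M[R[i]]_(p, q)) s i j :
  (X *m pmx R s) i j = X i (s j).
Proof.
rewrite mxE (bigD1 (s j)) //= /pmx !mxE eqxx mulr1 big1 ?addr0 // => l hl.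
by rewrite !mxE (negbTE hl) mulr0.
Qed.

Lemma le_bigmax0 (R : realType) (I : finType) (P : pred I) (f : I -> R) j :
  P j -> f j <= \big[Num.max/0]_(j | P j) f j.
Proof. by move=> hj; rewrite (bigD1 j) //= le_max lexx. Qed.

Lemma bigmax_le0 (R : realType) (I : finType) (P : pred I) (f : I -> R) x :
  0 <= x -> (forall j, P j -> f j <= x) -> \big[Num.max/0]_(j | P j) f j <= x.
Proof.
move=> h0 h; apply: (big_ind (fun y => y <= x)) => //.
  by move=> y z hy hz; rewrite ge_max hy hz.
Qed.

Lemma bigmax_eq0 (R : realType) (I : finType) (P : pred I) (f : I -> R) x j0 :
  0 <= x -> (forall j, P j -> f j <= x) -> P j0 -> x <= f j0 ->
  \big[Num.max/0]_(j | P j) f j = x.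
Proof.
move=> h0 h hj0 hx; apply/eqP; rewrite eq_le bigmax_le0 //=.
exact: le_trans hx (le_bigmax0 _ hj0).
Qed.

Lemma ctr1 (R : realType) p : ctr (1%:M : 'M[R[i]]_p) = 1%:M.
Proof.
apply/matrixP => i j; rewrite /ctr !mxE eq_sym conjc_nat //. Qed.

Lemma W_unitary (R : realType) p b d (B : 'M[R[i]]_(p, b)) Rs Ps H k :
  GB_run d B Rs Ps H -> (k <= d)%N -> ctr (W H k) *m W H k = 1%:M.
Proof.
move=> hrun; elim: k => [|k IH] hk.
  by rewrite /= mulmx1 ctr1.
have kb : (k < b)%N by apply: leq_trans hk (run_db hrun).
have [jm [_ [_ [hh _]]]] := run_step hrun kb hk.
rewrite /= ctr_mul -mulmxA (mulmxA (ctr (H k))) (proj1 hh) mul1mx IH //.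
exact: ltnW.
Qed.

Lemma prodW (R : realType) p b d (B : 'M[R[i]]_(p, b)) Rs Ps H k :
  GB_run d B Rs Ps H -> (k <= d)%N -> ctr (\prod_(l < k) H l) = W H k.
Proof.
move=> hrun; elim: k => [|k IH] hk.
  by rewrite big_ord0 ctr1.
have kb : (k < b)%N by apply: leq_trans hk (run_db hrun).
have [jm [_ [_ [hh _]]]] := run_step hrun kb hk.
rewrite big_ord_recr /= mulmxE ctr_mul IH ?(hh_herm hh) //.
exact: ltnW.
Qed.

Lemma sqrt_cabs2 (R : realType) (z : R[i]) : Num.sqrt (cabs z ^+ 2) = cabs z.
Proof. by rewrite sqrtr_sqr ger0_norm ?cabs_ge0. Qed.

Lemma cabs_le_colnorm (R : realType) p q (X : 'M[R[i]]_(p, q)) r (i : 'I_p) j :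
  (r <= i)%N -> cabs (X i j) <= colnorm X r j.
Proof.
move=> hr; rewrite -sqrt_cabs2 /colnorm ler_sqrt ?colnorm2_ge0 //.
rewrite /colnorm2 (bigD1 i) //= lerDl; apply: sumr_ge0 => l _.
by rewrite exprn_ge0 ?cabs_ge0.
Qed.

Lemma colnorm_le (R : realType) p q (X : 'M[R[i]]_(p, q)) r j z :
  colnorm2 X r j <= cabs z ^+ 2 -> colnorm X r j <= cabs z.
Proof.
by move=> h; rewrite -sqrt_cabs2 /colnorm ler_sqrt // exprn_ge0 ?cabs_ge0.
Qed.

End LemmaHelpers.
Import LemmaHelpers.
Unset Implicit Arguments. Set Strict Implicit.

Theorem lemma3p1 (R : realType) (m n k s t : nat) (A : 'M[R[i]]_(m, n))
  (hk1 : (1 <= k)%N) (hkmn : (k <= minn m n)%N)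
  (hsk : (s < k)%N) (ht : (1 <= t)%N) (hstn : (s + t <= n)%N)
  (Q : 'M[R[i]]_m) (Pi : 'M[R[i]]_n)
  (hQ : unitary Q) (hPi : is_perm_mx Pi)
  (hGBs : GB s (ctr Q *m A *m Pi))
  (gamma : 'I_n -> R)
  (hgamma : forall j : 'I_n, gamma j = colnorm2 (ctr Q *m A *m Pi) s j)
  (mu : R)
  (hmu : mu = \big[Num.max/0]_(j : 'I_n | (s + t <= j)%N) colnorm2 (A *m Pi) 0 j)
  (hmax : mu <= \big[Num.max/0]_(j : 'I_n | (s <= j < s + t)%N) gamma j)
  (b : nat) (hb1 : (1 <= b)%N) (hbt : (b <= t)%N)
  (sigma : 'S_t)
  (hsorted : forall (j1 j2 : 'I_n) (l1 l2 : 'I_t),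
      val j1 = (s + sigma l1)%N -> val j2 = (s + sigma l2)%N -> (l1 <= l2)%N ->
      gamma j2 <= gamma j1)
  (cand : pred 'I_n)
  (hcand : forall j : 'I_n,
      cand j = [exists l : 'I_t, (l < b)%N && (val j == s + sigma l)%N])
  (delta : R)
  (hdelta : delta = \big[Num.max/0]_(j : 'I_n | (s <= j < s + t)%N && ~~ cand j) gamma j)
  (B : 'M[R[i]]_(m - s, b))
  (hB : forall (i : 'I_(m - s)) (l : 'I_b) (r : 'I_m) (l' : 'I_t) (c : 'I_n),
      val r = (s + i)%N -> val l' = val l -> val c = (s + sigma l')%N ->
      B i l = (ctr Q *m A *m Pi) r c)
  (d : nat) (hd : d = minn (m - s) b)
  (Rs : nat -> 'M[R[i]]_(m - s, b)) (Ps : nat -> 'S_b) (H : nat -> 'M[R[i]]_(m - s))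
  (hrun : GB_run d B Rs Ps H)
  (c : nat) (hc1 : (1 <= c)%N) (hcd : (c <= d)%N)
  (hcsat : forall (r : 'I_(m - s)) (l : 'I_b), val r = c.-1 -> val l = c.-1 ->
      Num.max delta mu <= cabs (Rs d r l) ^+ 2)
  (hcmax : forall i : nat, (c < i <= d)%N ->
      ~ (forall (r : 'I_(m - s)) (l : 'I_b), val r = i.-1 -> val l = i.-1 ->
           Num.max delta mu <= cabs (Rs d r l) ^+ 2))
  (pihat : 'S_n)
  (hpi_out : forall j : 'I_n, ~~ (s <= j < s + t)%N -> pihat j = j)
  (hpi_cand : forall (j : 'I_n) (l : 'I_b) (l' : 'I_t),
      val j = (s + l)%N -> val l' = val (Ps d l) -> val (pihat j) = (s + sigma l')%N)
  (Qhat : 'M[R[i]]_m)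
  (hQhat1 : forall i j : 'I_m, (i < s)%N || (j < s)%N -> Qhat i j = (i == j :> nat)%:R)
  (hQhat2 : forall (i j : 'I_m) (i' j' : 'I_(m - s)),
      val i = (s + i')%N -> val j = (s + j')%N ->
      Qhat i j = (\prod_(l < c) H l) i' j') :
  GB (s + c) (ctr (Q *m Qhat) *m A *m (Pi *m pmx R pihat)).
Proof.
have hkm : (k <= m)%N by move: hkmn; rewrite leq_min => /andP[].
have hkn : (k <= n)%N by move: hkmn; rewrite leq_min => /andP[].
have hsm : (s < m)%N by lia.
have hdp : (d <= m - s)%N by rewrite hd geq_minl.
have hdb : (d <= b)%N by rewrite hd geq_minr.
have upP : forall l' : 'I_(m - s), (s + l' < m)%N.
  by move=> l'; have := ltn_ord l'; lia.
pose up (l' : 'I_(m - s)) : 'I_m := Ordinal (upP l').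
have hup : forall l', val (up l') = (s + l')%N by [].
have downP : forall i : 'I_m, (i - s < m - s)%N.
  by move=> i; have := ltn_ord i; lia.
have hupdown : forall i : 'I_m, (s <= i)%N -> i = up (Ordinal (downP i)).
  by move=> i hi; apply: val_inj => /=; lia.
set R0 := ctr Q *m A *m Pi.
set M := ctr (Q *m Qhat) *m A *m (Pi *m pmx R pihat).
pose Y : 'M[R[i]]_(m - s, n) := \matrix_(l', j) R0 (up l') j.
have hWc : ctr (W H c) *m W H c = 1%:M := W_unitary hrun hcd.
have eM : forall i j, M i j = (ctr Qhat *m R0) i (pihat j).
  move=> i j; have -> : M = (ctr Qhat *m R0) *m pmx R pihat.
    by rewrite /M /R0 ctr_mul !mulmxA.
  by rewrite mul_pmx.
have eN1 : forall (i : 'I_m) j, (i < s)%N -> (ctr Qhat *m R0) i j = R0 i j.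
  move=> i j hi; rewrite mxE -[RHS](sum_delta i (fun l => R0 l j)).
  apply: eq_bigr => l _; rewrite /ctr !mxE hQhat1 ?hi ?orbT // conjc_nat.
  by rewrite eq_sym.
have eN2 : forall l' j, (ctr Qhat *m R0) (up l') j = (W H c *m Y) l' j.
  move=> l' j; rewrite mxE (bigID (fun l : 'I_m => (s <= l)%N)) /=.
  rewrite [X in _ + X]big1 ?addr0; last first.
    move=> l hl; rewrite /ctr !mxE hQhat1; last by rewrite ltnNge hl.
    rewrite conjc_nat; case: eqP => [e|_]; last by rewrite mul0r.
    by move: hl; rewrite e hup leq_addr.
  rewrite (eq_bigl (fun l : 'I_m => (s <= l)%N && xpredT (l - s)%N)); last first.
    by move=> l; rewrite andbT.
  rewrite (sum_up hsm xpredT _ hup) mxE -(prodW hrun hcd).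
  apply: eq_bigr => l'' _; rewrite /ctr !mxE (hQhat2 (up l'') (up l') l'' l' erefl erefl) //.
have hYB : forall (lb : 'I_b) (jj : 'I_n), val jj = (s + lb)%N ->
    forall r, Y r (pihat jj) = B r (Ps d lb).
  move=> lb jj hj r; rewrite mxE.
  have hw : (Ps d lb < t)%N by apply: leq_trans (ltn_ord _) hbt.
  rewrite (hB r (Ps d lb) (up r) (Ordinal hw) (pihat jj)) //.
  exact: (hpi_cand jj lb (Ordinal hw) hj erefl).
have hMblock : forall (lb : 'I_b) (jj : 'I_n) (l' : 'I_(m - s)), val jj = (s + lb)%N ->
    M (up l') jj = G B H c l' (Ps d lb).
  move=> lb jj l' hj; rewrite eM eN2 /G mxE [RHS]mxE; apply: eq_bigr => r _.
  by rewrite (hYB lb jj hj).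
have hMN : forall r j, colnorm2 M r j = colnorm2 (ctr Qhat *m R0) r (pihat j).
  by move=> r j; apply: eq_bigr => i _; rewrite eM.
have hlowN : forall (j : 'I_n) r,
    colnorm2 (ctr Qhat *m R0) (s + r) j = colnorm2 (W H c *m Y) r j.
  move=> j r; rewrite /colnorm2.
  rewrite (eq_bigl (fun i : 'I_m => (s <= i)%N && (fun x => r <= x)%N (i - s)%N)); last first.
    by move=> i /=; apply/idP/idP; lia.
  by rewrite (sum_up hsm (fun x => r <= x)%N _ hup); apply: eq_bigr => l' _; rewrite eN2.
have hYR : forall j, colnorm2 Y 0 j = colnorm2 R0 s j.
  move=> j; rewrite /colnorm2.
  rewrite [RHS](eq_bigl (fun i : 'I_m => (s <= i)%N && xpredT (i - s)%N)); last first.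
    by move=> i /=; rewrite andbT.
  by rewrite (sum_up hsm xpredT _ hup); apply: eq_big => // l; rewrite mxE.
have hpi_range : forall j : 'I_n, (s <= j < s + t)%N -> (s <= pihat j < s + t)%N.
  move=> j hj; apply/negPn/negP => hn.
  have ej : pihat j = j by apply: (@perm_inj _ pihat); rewrite hpi_out.
  by move: hn; rewrite ej hj.
have hpi_nc : forall j : 'I_n, (s + b <= j)%N -> (j < s + t)%N -> ~~ cand (pihat j).
  move=> j h1 h2; rewrite hcand; apply/existsP => -[l0 /andP [hl0 /eqP e]].
  pose lb0 := ((Ps d)^-1 (Ordinal hl0))%g.
  have hlb0 := ltn_ord lb0.
  have hjj : (s + lb0 < n)%N by lia.
  pose jj : 'I_n := Ordinal hjj.
  have h := hpi_cand jj lb0 l0 erefl.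
  have : pihat jj = pihat j.
    by apply: val_inj; rewrite h ?e // /lb0 permKV.
  move/perm_inj => ejj.
  by move: h1; rewrite -ejj /=; lia.
have hXge : forall l (i0 : 'I_(m - s)) (l0 : 'I_b), val i0 = l -> val l0 = l ->
    (l < c)%N -> Num.max delta mu <= Dv B Ps H l i0 l0.
  move=> l i0 l0 hi0 hl0 hlc.
  have c1p : (c.-1 < m - s)%N by lia.
  have c1b : (c.-1 < b)%N by lia.
  have := hcsat (Ordinal c1p) (Ordinal c1b) erefl erefl.
  rewrite (run_RsG hrun (leqnn d)) mxE.
  rewrite (run_Dval hrun (k := d) (l := c.-1) (i := Ordinal c1p) (j := Ordinal c1b) erefl erefl) //; last by lia.
  move=> h; apply: le_trans h _.
  have hm := run_Dmono' hrun (l' := c.-1) (i' := Ordinal c1p) (j' := Ordinal c1b) hi0 hl0 erefl erefl.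
  by apply: hm; lia.
have hcol_top : forall r j', (r <= s)%N ->
    colnorm2 (ctr Qhat *m R0) r j' = colnorm2 R0 r j'.
  move=> r j' hr.
  have split : forall X : 'M[R[i]]_(m, n), colnorm2 X r j' =
      \sum_(i < m | (r <= i)%N && (i < s)%N) cabs (X i j') ^+ 2 + colnorm2 X s j'.
    move=> X; rewrite /colnorm2 (bigID (fun i : 'I_m => (s <= i)%N)) /= addrC.
    congr (_ + _); apply: eq_bigl => i; first by rewrite ltnNge.
    by apply/idP/idP; lia.
  rewrite !split; congr (_ + _).
    by apply: eq_bigr => i /andP[_ hi]; rewrite eN1.
  rewrite -(addn0 s) hlowN addn0 unitary_colnorm2 //.
have hP1 : forall l : 'I_b, (l < c)%N -> Ps d l = Ps c l.
  move=> l hl; have := run_P1 hrun (k := c) (e := d - c).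
  by rewrite subnKC //; apply.
split; [|split].
- rewrite leq_min; apply/andP; split; lia.
- move=> i j hj hij.
  case: (ltnP j s) => hjs.
    rewrite eM.
    have pj : pihat j = j by apply: hpi_out; rewrite negb_and -ltnNge hjs.
    rewrite pj; case: (ltnP i s) => his.
      by rewrite eN1 //; apply: (proj1 (proj2 hGBs)).
    rewrite (hupdown i his) eN2 mxE big1 // => r _; rewrite mxE.
    by rewrite (proj1 (proj2 hGBs)) ?mulr0 //= ; lia.
  have his : (s <= i)%N by lia.
  have hlb : (j - s < b)%N by lia.
  have hjv : val j = (s + Ordinal hlb)%N by rewrite /=; lia.
  rewrite (hupdown i his) (hMblock _ _ _ hjv).
  rewrite hP1 /=; last by lia.
  by apply: (run_tri hrun hcd) => /=; lia.
- move=> i i' hii' hi.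
  case: (ltnP i s) => his.
    have hi's : (i' < s)%N by rewrite -hii'.
    have pi' : pihat i' = i' by apply: hpi_out; rewrite negb_and -ltnNge hi's.
    have hdiag := proj2 (proj2 hGBs) i i' hii' his.
    have eMii : M i i' = R0 i i' by rewrite eM pi' eN1.
    symmetry; apply: (bigmax_eq0 (j0 := i')); first exact: cabs_ge0.
    + move=> j hj.
      have -> : colnorm M i j = colnorm R0 i (pihat j).
        have e1 := hMN i j; rewrite hcol_top in e1; last exact: ltnW.
        by rewrite /colnorm; move: e1; rewrite /colnorm2 => ->.
      rewrite eMii hdiag; apply: le_bigmax0.
      case: (ltnP j s) => h1.
        by rewrite hpi_out //= negb_and -ltnNge h1.
      case: (ltnP j (s + t)) => h2.
        have := hpi_range j; rewrite h1 h2 => /(_ isT) /andP[h3 _]; lia.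
      by rewrite hpi_out //= negb_and -leqNgt h2 orbT.
    + by rewrite hii'.
    + exact: cabs_le_colnorm.
  pose l := (i - s)%N.
  have hlc : (l < c)%N by rewrite /l; lia.
  have hlb : (l < b)%N by lia.
  pose i0 : 'I_(m - s) := Ordinal (downP i).
  pose l0 : 'I_b := Ordinal hlb.
  have hi'v : val i' = (s + l0)%N by rewrite /= /l -hii' subnKC.
  have eMii : M i i' = G B H c i0 (Ps d l0) by rewrite (hupdown i his) (hMblock l0 i' _ hi'v).
  have hx2 : cabs (M i i') ^+ 2 = Dv B Ps H l i0 l0.
    by rewrite eMii hP1 // (run_Dval hrun (k := c) (i := i0) (j := l0) erefl erefl hlc hcd).
  symmetry; apply: (bigmax_eq0 (j0 := i')); first exact: cabs_ge0.
  + move=> j hj; apply: colnorm_le; rewrite hx2.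
    have ei : val i = (s + l)%N by rewrite /l subnKC.
    rewrite ei hMN hlowN.
    case: (ltnP j (s + b)) => hjb.
      have hlb' : (j - s < b)%N by lia.
      pose lb' : 'I_b := Ordinal hlb'.
      have hjv : val j = (s + lb')%N by rewrite /=; lia.
      have -> : colnorm2 (W H c *m Y) l (pihat j) = colnorm2 (G B H c) l (Ps d lb').
        by apply: eq_bigr => r _; rewrite -(hMblock lb' j r hjv) eM eN2.
      have := run_norm hrun (k := l) (e := c - l) (r := l) (Ps d lb') (leqnn l).
      rewrite subnKC ?(ltnW hlc) // => ->; last exact: hcd.
      have hld : (l < d)%N by lia.
      have [j'' [hj'' ->]] : exists j'' : 'I_b, (l <= j'')%N /\ Ps d lb' = Ps l j''.
        have h := run_P2 hrun (k := l) (e := d - l); rewrite subnKC in h; last exact: ltnW hld.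
        by apply: h => //=; lia.
      have [jm [_ [_ hle]]] := run_diag hrun (i := i0) (j0 := l0) erefl erefl hld.
      exact: hle.
    apply: le_trans (colnorm2_mono _ _ (leq0n l)) _.
    rewrite unitary_colnorm2 // hYR.
    apply: le_trans (hXge l i0 l0 erefl erefl hlc).
    case: (ltnP j (s + t)) => hjt.
      rewrite -hgamma; apply: le_trans (_ : delta <= _); last by rewrite le_max lexx.
      rewrite hdelta; apply: le_bigmax0.
      rewrite hpi_nc // andbT; apply: hpi_range; lia.
    rewrite hpi_out; last by rewrite negb_and -leqNgt hjt orbT.
    apply: le_trans (colnorm2_mono _ _ (leq0n s)) _.
    have -> : R0 = ctr Q *m (A *m Pi) by rewrite /R0 mulmxA.
    rewrite unitary_colnorm2; last by rewrite ctrK; apply: mulmx1C.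
    apply: le_trans (_ : mu <= _); last by rewrite le_max lexx orbT.
    by rewrite hmu; apply: le_bigmax0; lia.
  + by rewrite hii'.
  + exact: cabs_le_colnorm.
Qed.
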